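(* Let $(X,Y)\sim p_{XY}$ be jointly distributed finite-valued random variables. Then $p_{XY}$ is saturable, i.e. $I(X;Y|Q_* )=0$, iff there exists a conditional pmf $p_{Q|XY}$ (with $Q$ finite-valued) such that $X-Q-Y$, $Q-X-Y$ and $Q-Y-X$ are all Markov chains.
   Context: For finite-valued random variables, $A-B-C$ means that $A$ and $C$ are conditionally independent given $B$. $Q_*$ is the maximal common random variable of $X$ and $Y$: consider the bipartite graph on vertex set $\mathcal{X}\cup\mathcal{Y}$ (disjoint union of the alphabets) with an edge between $x$ and $y$ iff $p_{XY}(x,y)>0$, and let $Q_*$ be the index of the connected component containing the realized pair $(X,Y)$. *)

(* Defs.v *)
From HB Require Import structures.
From mathcomp Require Import all_boot all_order all_algebra.
From mathcomp Require Import reals exp.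
Set Implicit Arguments. Unset Strict Implicit. Unset Printing Implicit Defensive.
Import Order.TTheory GRing.Theory Num.Theory.
Local Open Scope ring_scope.

Section Info.
Variable R : realType.

Definition is_pmf2 (A B : finType) (p : A -> B -> R) : Prop :=
  (forall a b, 0 <= p a b) /\ \sum_(a : A) \sum_(b : B) p a b = 1.

Definition is_pmf1 (A : finType) (p : A -> R) : Prop :=
  (forall a, 0 <= p a) /\ \sum_(a : A) p a = 1.

Section Three.
Variables (A B C : finType) (P : A -> B -> C -> R).
Definition margAB a b := \sum_(c : C) P a b c.
Definition margAC a c := \sum_(b : B) P a b c.
Definition margBC b c := \sum_(a : A) P a b c.
Definition margB b := \sum_(a : A) \sum_(c : C) P a b c.
Definition margC c := \sum_(a : A) \sum_(b : B) P a b c.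

(* Markov chain A - B - C : A and C conditionally independent given B,
   i.e. p(a,b,c) p(b) = p(a,b) p(b,c) for all a, b, c. *)
Definition markov : Prop :=
  forall a b c, P a b c * margB b = margAB a b * margBC b c.

(* conditional mutual information I(A;B|C) (natural log; 0 log 0 = 0) *)
Definition cmi : R :=
  \sum_(a : A) \sum_(b : B) \sum_(c : C)
    (if 0 < P a b c then
       P a b c * ln (P a b c * margC c / (margAC a c * margBC b c))
     else 0).
End Three.

Section Common.
Variables (X Y : finType) (p : X -> Y -> R).

Definition bip_edge : rel (X + Y)%type := fun u v =>
  match u, v with
  | inl x, inr y => 0 < p x y
  | inr y, inl x => 0 < p x y
  | _, _ => false
  end.

(* maximal common random variable Q_star: the connected component of the
   realized pair, labelled by its canonical representative vertex *)
Definition Qstar (x : X) (y : Y) : (X + Y)%type := fingraph.root bip_edge (inl x).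

Definition joint_Qstar (x : X) (y : Y) (q : (X + Y)%type) : R :=
  if q == Qstar x y then p x y else 0.

Definition saturable : Prop := cmi joint_Qstar = 0.
End Common.
End Info.

(* Main.v *)
From HB Require Import structures.
From mathcomp Require Import all_boot all_order all_algebra.
Require Import Defs.
From mathcomp Require Import reals exp ring lra.
Set Implicit Arguments. Unset Strict Implicit. Unset Printing Implicit Defensive.
Import Order.TTheory GRing.Theory Num.Theory.
Local Open Scope ring_scope.

Section G.
Variable R : realType.

Lemma ln_le_sub1 (u : R) : 0 < u -> ln u <= u - 1.
Proof.
move=> u0; have := @le_ln1Dx R (u - 1).
have -> : 1 + (u - 1) = u by ring.
apply; lra.
Qed.

Lemma ln_eq_sub1 (u : R) : 0 < u -> ln u = u - 1 -> u = 1.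
Proof.
move=> u0 h.
set s := Num.sqrt u.
have s0 : 0 < s by rewrite sqrtr_gt0.
have us : u = s ^+ 2 by rewrite sqr_sqrtr // ltW.
have hs : ln u = ln s *+ 2 by rewrite us lnXn.
have := ln_le_sub1 s0.
rewrite mulr2n in hs.
move=> hle.
have e : ln s + ln s = s^+2 - 1 by rewrite -hs h us.
have : s = 1 by nra.
by rewrite us => ->; rewrite expr1n.
Qed.

Lemma gibbs (I : finType) (P Q : I -> R) :
  (forall i, 0 <= P i) -> (forall i, 0 <= Q i) -> (forall i, 0 < P i -> 0 < Q i) ->
  \sum_i P i = 1 -> \sum_i Q i <= 1 ->
  \sum_i (if 0 < P i then P i * ln (P i / Q i) else 0) = 0 -> forall i, P i = Q i.
Proof.
move=> P0 Q0 PQ sP sQ sL.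
pose d i := (if 0 < P i then P i * ln (P i / Q i) - P i + Q i else Q i).
have d0 : forall i, 0 <= d i.
  move=> i; rewrite /d; case: ifP => // Pp.
  have Qp := PQ _ Pp.
  have u0 : 0 < Q i / P i by rewrite divr_gt0.
  have := ln_le_sub1 u0.
  rewrite -invf_div lnV ?posrE; last by rewrite divr_gt0.
  move=> hl.
  have : P i * (Q i / P i) = Q i by rewrite mulrC divfK // gt_eqF.
  nra.
have sd : \sum_i d i = \sum_i Q i - 1.
  rewrite -sP /d.
  have -> : \sum_i P i = \sum_i (if 0 < P i then P i else 0).
    apply: eq_bigr => i _; case: ifP => // h.
    by apply/eqP; rewrite eq_le P0 andbT leNgt h.
  have -> : \sum_i (if 0 < P i then P i * ln (P i / Q i) - P i + Q i else Q i)
     = \sum_i (if 0 < P i then P i * ln (P i / Q i) else 0)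
       - \sum_i (if 0 < P i then P i else 0) + \sum_i Q i.
    rewrite -sumrB -big_split /=; apply: eq_bigr => i _; case: ifP => _; ring.
  by rewrite sL; ring.
have dz : \sum_i d i = 0.
  by apply/eqP; rewrite eq_le sumr_ge0 // andbT sd subr_le0.
have := psumr_eq0P (P := xpredT) (fun i _ => d0 i) dz.
move=> h i; have := h i isT; rewrite /d; case: ifP => Pp.
  have Qp := PQ _ Pp.
  have u0 : 0 < Q i / P i by rewrite divr_gt0.
  rewrite -invf_div lnV ?posrE // => e.
  have : ln (Q i / P i) = Q i / P i - 1.
    have : P i * (ln (Q i / P i) - (Q i / P i - 1)) = 0.
      have : P i * (Q i / P i) = Q i by rewrite mulrC divfK // gt_eqF.
      move=> hq; rewrite mulrBr mulrBr hq; lra.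
    move/eqP; rewrite mulf_eq0 gt_eqF //= subr_eq0 => /eqP //.
  move/(ln_eq_sub1 u0) => hu.
  by rewrite -(divfK (lt0r_neq0 Pp) (Q i)) hu mul1r.
by move=> ->; apply/eqP; rewrite eq_le P0 andbT leNgt Pp.
Qed.
End G.

Section Main.
Variables (R : realType) (X Y : finType) (p : X -> Y -> R).
Hypothesis hp : is_pmf2 p.

Let e := bip_edge p.
Let J := joint_Qstar p.
Let f (x : X) := fingraph.root e (inl x).
Let pX x := \sum_(y : Y) p x y.
Let pY y := \sum_(x : X) p x y.

Lemma p_ge0 x y : 0 <= p x y. Proof. by case: hp. Qed.
Lemma p_eq0 x y : ~~ (0 < p x y) -> p x y = 0.
Proof. by move=> h; apply/eqP; rewrite eq_le p_ge0 andbT leNgt. Qed.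

Lemma term_le_sum (I : finType) (F : I -> R) i0 :
  (forall i, 0 <= F i) -> F i0 <= \sum_i F i.
Proof. by move=> h; rewrite (bigD1 i0) //= lerDl sumr_ge0. Qed.

Lemma esym : symmetric e.
Proof. by move=> [x|y] [x'|y']. Qed.

Lemma csym : connect_sym e.
Proof. exact: sym_connect_sym esym. Qed.

Lemma edge_root x y : 0 < p x y -> fingraph.root e (inl x) = fingraph.root e (inr y).
Proof. by move=> h; apply/eqP; rewrite (root_connect csym); apply: connect1. Qed.

Lemma connect_inv (G : (X + Y)%type -> Prop) :
  (forall u v, e u v -> G u -> G v) -> forall u v, connect e u v -> G u -> G v.
Proof.
move=> hG u v /connectP [s hs ->]; elim: s u hs => [|w s IH] u //= /andP [huw hs] Gu.
exact: (IH w hs (hG _ _ huw Gu)).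
Qed.

Lemma J_ge0 x y k : 0 <= J x y k.
Proof. by rewrite /J /joint_Qstar; case: ifP => // _; exact: p_ge0. Qed.

Lemma JE x y k : J x y k = if k == f x then p x y else 0.
Proof. by []. Qed.

Lemma sumJ_k x y : \sum_k J x y k = p x y.
Proof.
rewrite (bigD1 (f x)) //= big1 ?addr0; first by rewrite JE eqxx.
by move=> k /negbTE hk; rewrite JE hk.
Qed.

Lemma margAC_J x k : margAC J x k = if k == f x then pX x else 0.
Proof.
rewrite /margAC; case: ifP => hk; first by apply: eq_bigr => y _; rewrite JE hk.
by apply: big1 => y _; rewrite JE hk.
Qed.

Lemma margBC_J y k : margBC J y k = if k == fingraph.root e (inr y) then pY y else 0.
Proof.
rewrite /margBC /pY; case: ifP => hk.
  apply: eq_bigr => x _; rewrite JE.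
  have [h|h] := boolP (0 < p x y).
    by rewrite /f (edge_root h) hk.
  by case: ifP => // _; rewrite p_eq0.
apply: big1 => x _; rewrite JE.
have [h|h] := boolP (0 < p x y).
  by rewrite /f (edge_root h) hk.
by case: ifP => // _; rewrite p_eq0.
Qed.

Lemma sum_p : \sum_x \sum_y p x y = 1. Proof. by case: hp. Qed.

Lemma tri (F : X -> Y -> (X + Y)%type -> R) :
  \sum_x \sum_y \sum_k F x y k = \sum_(t : (X * Y) * (X + Y)) F t.1.1 t.1.2 t.2.
Proof. by rewrite pair_big /= pair_big /=. Qed.

Lemma sum_prod (a : X -> R) (b : Y -> R) c :
  \sum_x \sum_y (a x * b y / c) = (\sum_x a x) * (\sum_y b y) / c.
Proof.
rewrite mulr_suml mulr_suml; apply: eq_bigr => x _.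
rewrite mulr_sumr mulr_suml; apply: eq_bigr => y _ //.
Qed.

Lemma J_le_A x y k : J x y k <= margAC J x k.
Proof. by rewrite /margAC; apply: (term_le_sum (F := fun b => J x b k)) => y'; apply: J_ge0. Qed.
Lemma J_le_B x y k : J x y k <= margBC J y k.
Proof. by rewrite /margBC; apply: (term_le_sum (F := fun a => J a y k)) => x'; apply: J_ge0. Qed.
Lemma A_ge0 x k : 0 <= margAC J x k.
Proof. by apply: sumr_ge0 => y _; apply: J_ge0. Qed.
Lemma B_ge0 y k : 0 <= margBC J y k.
Proof. by apply: sumr_ge0 => x _; apply: J_ge0. Qed.
Lemma A_le_C x k : margAC J x k <= margC J k.
Proof. by rewrite /margC; apply: (term_le_sum (F := fun x => margAC J x k)) => x'; apply: A_ge0. Qed.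
Lemma C_ge0 k : 0 <= margC J k.
Proof. by apply: sumr_ge0 => x _; apply: A_ge0. Qed.

Lemma sumB k : \sum_y margBC J y k = margC J k.
Proof. by rewrite /margBC /margC exchange_big. Qed.

Lemma sumC : \sum_k margC J k = 1.
Proof.
rewrite /margC exchange_big /=.
under eq_bigr do rewrite exchange_big /=.
under eq_bigr do under eq_bigr do rewrite sumJ_k.
exact: sum_p.
Qed.

Lemma CI_of_cmi : cmi J = 0 ->
  forall x y k, J x y k * margC J k = margAC J x k * margBC J y k.
Proof.
move=> hc.
pose Pg (t : (X * Y) * (X + Y)) := J t.1.1 t.1.2 t.2.
pose Qg (t : (X * Y) * (X + Y)) :=
  margAC J t.1.1 t.2 * margBC J t.1.2 t.2 / margC J t.2.
have H : forall t, Pg t = Qg t.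
  apply: gibbs.
  - by move=> t; apply: J_ge0.
  - by move=> t; rewrite /Qg divr_ge0 ?mulr_ge0 ?A_ge0 ?B_ge0 ?C_ge0.
  - move=> [[x y] k] /= hJ; rewrite /Qg /=.
    have hA := J_le_A x y k; have hB := J_le_B x y k; have hC := A_le_C x k.
    rewrite divr_gt0 // ?mulr_gt0 //; apply: (lt_le_trans hJ) => //.
    exact: le_trans hA hC.
  - rewrite /Pg -(tri (fun x y k => J x y k)).
    under eq_bigr do under eq_bigr do rewrite sumJ_k.
    exact: sum_p.
  - rewrite /Qg -(tri (fun x y k => margAC J x k * margBC J y k / margC J k)).
    under eq_bigr do rewrite exchange_big /=.
    rewrite exchange_big /=.
    under eq_bigr => k _ do rewrite (sum_prod (fun x => margAC J x k) (fun y => margBC J y k)) (sumB k).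
    rewrite le_eqVlt; apply/orP; left; apply/eqP; rewrite -sumC.
    apply: eq_bigr => k _; rewrite [\sum_x _]/(margC J k).
    have [->|h] := eqVneq (margC J k) 0; first by rewrite !mulr0 mul0r.
    by rewrite mulfK.
  - apply: (etrans _ hc); rewrite /cmi (tri (fun a b c => if 0 < J a b c then
      J a b c * ln (J a b c * margC J c / (margAC J a c * margBC J b c)) else 0)).
    apply: eq_bigr => [[[x y] k]] _ /=; rewrite /Pg /Qg /=.
    by rewrite invf_div mulrA.
move=> x y k; have := H ((x, y), k); rewrite /Pg /Qg /= => ->.
have [hC|h] := eqVneq (margC J k) 0.
  have h0 : margAC J x k = 0.
    by apply/eqP; rewrite eq_le A_ge0 andbT -hC A_le_C.
  by rewrite hC h0 !mul0r ?mulr0.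
by rewrite divfK.
Qed.

Lemma markov_ext (A B C : finType) (P P' : A -> B -> C -> R) :
  (forall a b c, P a b c = P' a b c) -> markov P' -> markov P.
Proof.
move=> h hm a b c; have := hm a b c; rewrite /margB /margAB /margBC h.
have E1 : \sum_a0 \sum_c0 P a0 b c0 = \sum_a0 \sum_c0 P' a0 b c0.
  by apply: eq_bigr => *; apply: eq_bigr => *; apply: h.
have E2 : \sum_c0 P a b c0 = \sum_c0 P' a b c0 by apply: eq_bigr => *; apply: h.
have E3 : \sum_a0 P a0 b c = \sum_a0 P' a0 b c by apply: eq_bigr => *; apply: h.
by rewrite E1 E2 E3.
Qed.

Let Wi (x : X) (y : Y) (q : (X + Y)%type) : R := if q == Qstar p x y then 1 else 0.

Lemma pW x y q : p x y * Wi x y q = J x y q.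
Proof. by rewrite /Wi JE /Qstar -/(f x); case: ifP => _; rewrite ?mulr1 ?mulr0. Qed.

Lemma chainA : cmi J = 0 -> markov (fun x q y => p x y * Wi x y q).
Proof.
move=> hc; apply: (markov_ext (P' := fun x q y => J x y q)) => [x q y|]; first exact: pW.
move=> x q y; exact: (CI_of_cmi hc x y q).
Qed.

Lemma chainB : markov (fun q x y => p x y * Wi x y q).
Proof.
apply: (markov_ext (P' := fun q x y => J x y q)) => [q x y|]; first exact: pW.
move=> q x y; rewrite /margB /margAB /margBC /= exchange_big /=.
under eq_bigr do rewrite sumJ_k.
rewrite sumJ_k (_ : \sum_b J x b q = margAC J x q) // margAC_J JE.
by case: ifP => _; rewrite ?mul0r ?mulr0 // mulrC.
Qed.

Lemma chainC : markov (fun q y x => p x y * Wi x y q).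
Proof.
apply: (markov_ext (P' := fun q y x => J x y q)) => [q y x|]; first exact: pW.
move=> q y x; rewrite /margB /margAB /margBC /= exchange_big /=.
under eq_bigr do rewrite sumJ_k.
rewrite sumJ_k (_ : \sum_a J a y q = margBC J y q) // margBC_J JE.
have [h|h] := boolP (0 < p x y).
  rewrite -/(pY y) -(edge_root h) -/(f x).
  by case: ifP => _; rewrite ?mul0r ?mulr0 // mulrC.
by rewrite (p_eq0 h) mulr0; case: ifP; rewrite mul0r.
Qed.

Lemma sum_prodP (P1 : pred X) (P2 : pred Y) (a : X -> R) (b : Y -> R) c :
  \sum_(x | P1 x) \sum_(y | P2 y) (a x * b y * c) =
  (\sum_(x | P1 x) a x) * (\sum_(y | P2 y) b y) * c.
Proof.
rewrite mulr_suml mulr_suml; apply: eq_bigr => x _.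
rewrite mulr_sumr mulr_suml; apply: eq_bigr => y _ //.
Qed.

Lemma pX_ge_p x y : p x y <= pX x.
Proof. by apply: (term_le_sum (F := fun b => p x b)) => b; apply: p_ge0. Qed.
Lemma pY_ge_p x y : p x y <= pY y.
Proof. by apply: (term_le_sum (F := fun a => p a y)) => a; apply: p_ge0. Qed.

Section Dir2.
Variables (Q : finType) (W : X -> Y -> Q -> R).
Hypothesis hW : forall x y, is_pmf1 (W x y).
Hypothesis hA : markov (fun (x : X) (q : Q) (y : Y) => p x y * W x y q).
Hypothesis hB : markov (fun (q : Q) (x : X) (y : Y) => p x y * W x y q).
Hypothesis hC : markov (fun (q : Q) (y : Y) (x : X) => p x y * W x y q).

Let Pxq x q := \sum_y p x y * W x y q.
Let Pqy q y := \sum_x p x y * W x y q.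
Let Pq q := \sum_x \sum_y p x y * W x y q.

Lemma sumW x y : \sum_q W x y q = 1. Proof. by case: (hW x y). Qed.

Lemma hA' x q y : p x y * W x y q * Pq q = Pxq x q * Pqy q y.
Proof. exact: hA x q y. Qed.

Lemma hB' q x y : p x y * W x y q * pX x = Pxq x q * p x y.
Proof.
have := hB q x y; rewrite /margB /margAB /margBC /= exchange_big /=.
under eq_bigr => y' _ do rewrite -mulr_sumr sumW mulr1.
by rewrite -mulr_sumr sumW mulr1.
Qed.

Lemma hC' q x y : p x y * W x y q * pY y = Pqy q y * p x y.
Proof.
have := hC q y x; rewrite /margB /margAB /margBC /= exchange_big /=.
under eq_bigr => x' _ do rewrite -mulr_sumr sumW mulr1.
by rewrite -mulr_sumr sumW mulr1.
Qed.

Lemma cancel_pos (a b c : R) : 0 < c -> a * c = b * c -> a = b.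
Proof. by move=> hc; apply: (mulIf (lt0r_neq0 hc)). Qed.

Section Pair.
Variables (x0 : X) (y0 : Y).
Hypothesis hp0 : 0 < p x0 y0.
Let k := f x0.
Let r q := W x0 y0 q.

Let G (v : (X + Y)%type) : Prop :=
  match v with
  | inl x => forall q, Pxq x q = pX x * r q
  | inr y => forall q, Pqy q y = pY y * r q
  end.

Lemma W_eqX x y q : G (inl x) -> 0 < p x y -> W x y q = r q.
Proof.
move=> /= hx hpxy; have hpX : 0 < pX x by apply: lt_le_trans hpxy (pX_ge_p x y).
have := hB' q x y; rewrite hx => h.
apply: (cancel_pos hpX); apply: (cancel_pos hpxy); nra.
Qed.

Lemma W_eqY x y q : G (inr y) -> 0 < p x y -> W x y q = r q.
Proof.
move=> /= hy hpxy; have hpY : 0 < pY y by apply: lt_le_trans hpxy (pY_ge_p x y).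
have := hC' q x y; rewrite hy => h.
apply: (cancel_pos hpY); apply: (cancel_pos hpxy); nra.
Qed.

Lemma G_edge u v : e u v -> G u -> G v.
Proof.
case: u => [x|y]; case: v => [x'|y'] //= hpxy hG q.
- have hw := W_eqX (y := y') q hG hpxy.
  apply: (cancel_pos hpxy); rewrite -hC' hw; ring.
- have hw := W_eqY (x := x') q hG hpxy.
  apply: (cancel_pos hpxy); rewrite -hB' hw; ring.
Qed.

Lemma G_base : G (inl x0).
Proof. move=> q /=; apply: (cancel_pos hp0); rewrite -hB' /r; ring. Qed.

Lemma G_all v : k == fingraph.root e v -> G v.
Proof.
move=> hk; apply: (connect_inv G_edge (u := inl x0)); last exact: G_base.
by rewrite -(root_connect csym).
Qed.

Lemma key : p x0 y0 * margC J k = pX x0 * pY y0.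
Proof.
have [q0 hq0] : exists q, 0 < r q.
  case: (boolP [exists q, 0 < r q]) => [/existsP //|/existsPn h].
  have := sumW x0 y0; rewrite big1 => [|q _].
    by move=> /eqP; rewrite eq_sym oner_eq0.
  have := h q; case: (hW x0 y0) => h0 _; move: (h0 q).
  by rewrite /r => a b; apply/eqP; rewrite eq_le a andbT leNgt.
have rel : forall x y, k == f x -> k == fingraph.root e (inr y) ->
    p x y * Pq q0 = pX x * pY y * r q0.
  move=> x y hx hy; have Gx := G_all (v := inl x) hx; have Gy := G_all (v := inr y) hy.
  have := hA' x q0 y; rewrite Gx Gy.
  have -> : p x y * W x y q0 = p x y * r q0.
    have [h|h] := boolP (0 < p x y); first by rewrite (W_eqX q0 Gx h).
    by rewrite (p_eq0 h) !mul0r.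
  move=> h; apply: (cancel_pos hq0); rewrite mulrAC h; ring.
pose S := \sum_(x | k == f x) pX x.
have S1 : \sum_(x | k == f x) \sum_(y | k == fingraph.root e (inr y)) p x y = S.
  apply: eq_bigr => x hx; rewrite big_mkcond; apply: eq_bigr => y _.
  have [h|h] := boolP (0 < p x y); first by rewrite -(edge_root h) -/(f x) hx.
  by rewrite (p_eq0 h); case: ifP.
have S2 : \sum_(x | k == f x) \sum_(y | k == fingraph.root e (inr y)) p x y =
          \sum_(y | k == fingraph.root e (inr y)) pY y.
  rewrite exchange_big; apply: eq_bigr => y hy; rewrite big_mkcond; apply: eq_bigr => x _.
  have [h|h] := boolP (0 < p x y); first by rewrite /f (edge_root h) hy.
  by rewrite (p_eq0 h); case: ifP.
have Spos : 0 < S.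
  apply: (lt_le_trans hp0); apply: (le_trans (pX_ge_p x0 y0)).
  rewrite /S (bigD1 x0) /= ?eqxx //; rewrite lerDl sumr_ge0 // => x _.
  by apply: sumr_ge0 => y _; apply: p_ge0.
have hS : S * Pq q0 = S * S * r q0.
  rewrite -{1}S1 mulr_suml.
  under eq_bigr => x hx do rewrite mulr_suml.
  have -> : \sum_(x | k == f x) \sum_(y | k == fingraph.root e (inr y)) p x y * Pq q0 =
    \sum_(x | k == f x) \sum_(y | k == fingraph.root e (inr y)) (pX x * pY y * r q0).
    by apply: eq_bigr => x hx; apply: eq_bigr => y hy; apply: rel.
  by rewrite sum_prodP -/S -S2 S1.
have hc : Pq q0 = S * r q0.
  by apply: (mulfI (lt0r_neq0 Spos)); rewrite hS mulrA.
have hk : k == f x0 by [].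
have hy0 : k == fingraph.root e (inr y0) by rewrite /k /f (edge_root hp0).
have := rel x0 y0 hk hy0; rewrite hc.
have -> : margC J k = S.
  rewrite /S [RHS]big_mkcond /=; apply: eq_bigr => x _.
  by rewrite -/(margAC J x k) margAC_J.
by move=> h; apply: (cancel_pos hq0); rewrite -h mulrA.
Qed.
End Pair.

Lemma cmi0 : cmi J = 0.
Proof.
rewrite /cmi; apply: big1 => x _; apply: big1 => y _; apply: big1 => k _.
case: ifP => // hJ.
have hk : k == f x by move: hJ; rewrite JE; case: ifP => //; rewrite ltxx.
have hpxy : 0 < p x y by move: hJ; rewrite JE hk.
move/eqP: hk => ->.
rewrite margAC_J margBC_J -(edge_root hpxy) -/(f x) JE eqxx.
rewrite -(key hpxy) divff ?ln1 ?mulr0 //.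
rewrite key // mulf_neq0 // lt0r_neq0 //.
  exact: lt_le_trans hpxy (pX_ge_p x y).
exact: lt_le_trans hpxy (pY_ge_p x y).
Qed.
End Dir2.

End Main.

Theorem lemmaA1 (R : realType) (X Y : finType) (p : X -> Y -> R)
  (hp : is_pmf2 p) :
  saturable p <->
  exists (Q : finType) (W : X -> Y -> Q -> R),
    (forall x y, is_pmf1 (W x y)) /\
    (* X - Q - Y *)
    markov (fun (x : X) (q : Q) (y : Y) => p x y * W x y q) /\
    (* Q - X - Y *)
    markov (fun (q : Q) (x : X) (y : Y) => p x y * W x y q) /\
    (* Q - Y - X *)
    markov (fun (q : Q) (y : Y) (x : X) => p x y * W x y q).
Proof.
split.
- move=> hs.
  exists (X + Y)%type, (fun x y q => if q == Qstar p x y then (1 : R) else 0).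
  split; [|split; [|split]].
  + move=> x y; split => [q|]; first by case: ifP.
    rewrite (bigD1 (Qstar p x y)) //= eqxx big1 ?addr0 // => q /negbTE ->.
    by [].
  + exact: chainA hp hs.
  + exact: chainB.
  + exact: chainC hp.
- by move=> [Q [W [hW [hA [hB hC]]]]]; exact: (cmi0 hp hW hA hB hC).
Qed.
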